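(* Let $R\subseteq[n-1]$. An $R$-permutation $\pi$ is $R$-312-avoiding if and only if for every $h\in[r]$ one has $$\big(\min\{\pi_{q_h+1},\dots,\pi_{q_{h+1}}\},\ \max\{\pi_1,\dots,\pi_{q_h}\}\big)\subseteq\{\pi_1,\dots,\pi_{q_{h+1}}\},$$ where $(x,y)$ denotes the set of integers strictly between $x$ and $y$.
   Context: Fix $n\ge1$, $[m]=\{1,\dots,m\}$. Fix $R\subseteq[n-1]$ with elements $q_1<\dots<q_r$ ($r=|R|\ge 0$), $q_0:=0$, $q_{r+1}:=n$. The $h$-th carrel ($h\in[r+1]$) is the index set $\{q_{h-1}+1,\dots,q_h\}$. An $R$-permutation is a permutation $\pi=(\pi_1,\dots,\pi_n)$ of $[n]$ in one-line notation that is strictly increasing on each carrel. An $R$-permutation $\pi$ is $R$-312-containing if there exist $h\in[r-1]$ and indices $1\le a\le q_h<b\le q_{h+1}<c\le n$ with $\pi_b<\pi_c<\pi_a$; otherwise it is $R$-312-avoiding. *)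

(* Defs.v *)
From mathcomp Require Import all_boot.
Set Implicit Arguments. Unset Strict Implicit. Unset Printing Implicit Defensive.

(* R ⊆ [n-1] is given by its increasing enumeration R = [:: q_1; ...; q_r]
   (a strictly increasing list of integers in [1, n-1]).
   A permutation pi of [n] in one-line notation is a seq nat; entries are
   1-based: pi_i = nth 0 pi i.-1. *)


Definition qR (n : nat) (R : seq nat) (h : nat) : nat :=
  if h == 0 then 0 else if h <= size R then nth 0 R h.-1 else n.

Definition pe (pi : seq nat) (i : nat) : nat := nth 0 pi i.-1.

Definition valid_R (n : nat) (R : seq nat) : Prop :=
  sorted ltn R /\ all (fun x => (0 < x) && (x < n)) R.

Definition R_perm (n : nat) (R : seq nat) (pi : seq nat) : Prop :=
  perm_eq pi (iota 1 n) /\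
  forall h, 1 <= h <= size R + 1 ->
    forall i j, qR n R h.-1 < i -> i < j -> j <= qR n R h -> pe pi i < pe pi j.

Definition R312_containing (n : nat) (R : seq nat) (pi : seq nat) : Prop :=
  exists h a b c,
    [/\ 1 <= h <= size R - 1,
        1 <= a <= qR n R h,
        qR n R h < b <= qR n R h.+1,
        qR n R h.+1 < c <= n &
        pe pi b < pe pi c < pe pi a].

Definition R312_avoiding (n : nat) (R : seq nat) (pi : seq nat) : Prop :=
  ~ R312_containing n R pi.

(* Main.v *)
Require Import Defs.
From mathcomp Require Import all_boot.
From mathcomp Require Import zify.

Lemma bigmin_lt {s : seq nat} {F : nat -> nat} {d x} :
  \big[minn/d]_(i <- s) F i < x -> d < x \/ exists2 i, i \in s & F i < x.
Proof.
elim: s => [|y s IH]; rewrite ?big_nil ?big_cons; first by left.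
rewrite gtn_min => /orP [H|/IH [H|[i Hi Hf]]].
- by right; exists y; rewrite ?mem_head.
- by left.
- by right; exists i => //; rewrite in_cons Hi orbT.
Qed.

Lemma bigmin_le (s : seq nat) (F : nat -> nat) d i :
  i \in s -> \big[minn/d]_(j <- s) F j <= F i.
Proof.
elim: s => [|y s IH] //; rewrite big_cons in_cons => /orP [/eqP->|Hi].
- exact: geq_minl.
- by rewrite geq_min IH ?orbT.
Qed.

Lemma bigmax_gt {s : seq nat} {F : nat -> nat} {x} :
  x < \max_(i <- s) F i -> exists2 i, i \in s & x < F i.
Proof.
elim: s => [|y s IH]; rewrite ?big_nil ?big_cons //.
rewrite leq_max => /orP [H|/IH [i Hi Hf]].
- by exists y; rewrite ?mem_head.
- by exists i => //; rewrite in_cons Hi orbT.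
Qed.

Lemma le_bigmax (s : seq nat) (F : nat -> nat) i :
  i \in s -> F i <= \max_(j <- s) F j.
Proof.
elim: s => [|y s IH] //; rewrite big_cons in_cons => /orP [/eqP->|Hi].
- exact: leq_maxl.
- by rewrite leq_max IH ?orbT.
Qed.

Lemma qR_le n R h : valid_R n R -> qR n R h <= n.
Proof.
move=> [_ /allP HR]; rewrite /qR.
case: h => [|h] //=; case: ifP => // Hh.
have /HR /andP [_ /ltnW //] : nth 0 R h \in R.
by apply: mem_nth.
Qed.

Theorem fact4p4 (n : nat) (R : seq nat) (pi : seq nat) :
  1 <= n -> valid_R n R -> R_perm n R pi ->
  (R312_avoiding n R pi <->
   forall h, 1 <= h <= size R ->
     forall x : nat,
       \big[minn/n.+1]_((qR n R h).+1 <= i < (qR n R h.+1).+1) pe pi i < x ->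
       x < \max_(1 <= i < (qR n R h).+1) pe pi i ->
       x \in take (qR n R h.+1) pi).
Proof.
move=> Hn HR [Hp _].
have Hsz : size pi = n by rewrite (perm_size Hp) size_iota.
have Hu : uniq pi by rewrite (perm_uniq Hp) iota_uniq.
have Hmem : forall y, (y \in pi) = (1 <= y <= n).
  by move=> y; rewrite (perm_mem Hp) mem_iota add1n ltnS.
have Hpe : forall i, 0 < pe pi i -> pe pi i <= n.
  move=> i; rewrite /pe; case: (ltnP i.-1 (size pi)) => Hi.
    by move=> _; have := mem_nth 0 Hi; rewrite Hmem => /andP [].
  by rewrite nth_default.
split.
- move=> Hav h Hh x Hmin Hmax.
  apply/negPn/negP => Hx; apply: Hav.
  have [a Ha Hxa] := bigmax_gt Hmax.
  have Han := Hpe a (leq_ltn_trans (leq0n _) Hxa).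
  have [Hd|[b Hb Hbx]] := bigmin_lt Hmin; first by lia.
  have Hxin : x \in pi by rewrite Hmem; apply/andP; split; lia.
  set q := qR n R h.+1 in Hx.
  set j := index x pi.
  have Hj : j < n by rewrite -Hsz index_mem.
  have Hjq : q <= j.
    rewrite leqNgt; apply/negP => Hjq; move/negP: Hx; apply.
    rewrite -(nth_index 0 Hxin) -/j -(nth_take 0 Hjq).
    by apply: mem_nth; rewrite size_take Hsz; case: ifP => // ; lia.
  have Hhr : h <= size R - 1.
    case: (ltnP h (size R)) => Hh2; first by lia.
    have : q = n by rewrite /q /qR /= ltnNge Hh2.
    lia.
  exists h, a, b, j.+1; split.
  + lia.
  + by move: Ha; rewrite mem_index_iota.
  + by move: Hb; rewrite mem_index_iota.
  + lia.
  + by rewrite /pe /= /j nth_index // Hbx Hxa.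
- move=> Hc [h [a [b [c [Hh Ha Hb Hcc /andP [Hbc Hca]]]]]].
  have Hh' : 1 <= h <= size R by lia.
  have := Hc h Hh' (pe pi c).
  have Hmin : \big[minn/n.+1]_((qR n R h).+1 <= i < (qR n R h.+1).+1) pe pi i < pe pi c.
    apply: leq_ltn_trans Hbc; apply: bigmin_le; rewrite mem_index_iota; lia.
  have Hmax : pe pi c < \max_(1 <= i < (qR n R h).+1) pe pi i.
    apply: leq_trans Hca _; apply: (le_bigmax _ (pe pi)); rewrite mem_index_iota; lia.
  move=> /(_ Hmin Hmax).
  set q := qR n R h.+1.
  have Hq : q <= n by apply: qR_le.
  rewrite /pe.
  have Hc1 : c.-1 = q + (c.-1 - q) by lia.
  rewrite Hc1 -(nth_drop q 0 pi) => Hin.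
  have Hin2 : nth 0 (drop q pi) (c.-1 - q) \in drop q pi.
    by apply: mem_nth; rewrite size_drop Hsz; lia.
  move: Hu; rewrite -(cat_take_drop q pi) cat_uniq => /and3P [_ /hasP Hd _].
  by apply: Hd; exists (nth 0 (drop q pi) (c.-1 - q)).
Qed.
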